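(* Let $k=4$, $r\ge 2$, $d=2^r$, $n\ge d$ and $i=n-d$. Then in $\mathbb{F}_2[w_2,w_3,w_4]$, \[ \beta_3^{i-1}q_n+w_4\beta_3^{i-2}q_{n-1}+\big(w_2\beta_3^{i-1}+w_4^2\beta_3^{i-3}\big)q_{n-2}+\beta_3^iq_{n-3}=0, \] a homogeneous relation of degree $(d-3)+4i$, where $\beta_3^0=1$, $\beta_3^m=0$ for $m<0$, and $\beta_3^{m+1}=w_3\beta_3^m+w_2w_4\beta_3^{m-1}+w_4^3\beta_3^{m-3}$ for $m\ge 0$.
   Context: In $\mathbb{F}_2[w_2,w_3,w_4]$ ($\deg w_i=i$), $q_0=1$, $q_m=0$ for $m<0$, and $q_m=w_2q_{m-2}+w_3q_{m-3}+w_4q_{m-4}$ for $m\ge1$. *)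

(* Defs.v *)
From mathcomp Require Import all_boot all_algebra.
From mathcomp Require Import mpoly.
Set Implicit Arguments. Unset Strict Implicit. Unset Printing Implicit Defensive.
Import GRing.Theory.
Local Open Scope ring_scope.

Definition PR := {mpoly 'F_2[3]}.
Definition w2 : PR := 'X_(inord 0).
Definition w3 : PR := 'X_(inord 1).
Definition w4 : PR := 'X_(inord 2).

(* Window (q_m, q_{m-1}, q_{m-2}, q_{m-3}) for m : nat, with q_j = 0 for j < 0. *)
Fixpoint qwin (m : nat) : PR * PR * PR * PR :=
  match m with
  | 0%N => (1, 0, 0, 0)
  | m'.+1 => let: (a, b, c, d) := qwin m' in
             (w2 * b + w3 * c + w4 * d, a, b, c)
  end.

(* q_m for integer m: q_0 = 1, q_m = 0 for m < 0,
   q_m = w2 q_{m-2} + w3 q_{m-3} + w4 q_{m-4} for m >= 1. *)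
Definition q (m : int) : PR :=
  match m with
  | Posz k => (qwin k).1.1.1
  | Negz _ => 0
  end.

(* Window (b_m, b_{m-1}, b_{m-2}, b_{m-3}) for beta_3^m, m : nat. *)
Fixpoint bwin (m : nat) : PR * PR * PR * PR :=
  match m with
  | 0%N => (1, 0, 0, 0)
  | m'.+1 => let: (a, b, c, d) := bwin m' in
             (w3 * a + w2 * w4 * b + w4 ^+ 3 * d, a, b, c)
  end.

(* beta_3^m for integer m (a name, not a power): beta_3^0 = 1, beta_3^m = 0
   for m < 0, beta_3^{m+1} = w3 beta_3^m + w2 w4 beta_3^{m-1} + w4^3 beta_3^{m-3}. *)
Definition beta3 (m : int) : PR :=
  match m with
  | Posz k => (bwin k).1.1.1
  | Negz _ => 0
  end.

(* Main.v *)
Require Import Defs.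
From mathcomp Require Import all_boot all_algebra.
From mathcomp Require Import mpoly zify ring.
Import GRing.Theory.
Local Open Scope ring_scope.
Lemma two0F : (2%:R : 'F_2) = 0.
Proof. apply/eqP. by []. Qed.
Lemma two0 : (2%:R : PR) = 0.
Proof. by rewrite -(rmorph_nat (@mpolyC 3 'F_2)) two0F rmorph0. Qed.
Lemma char2 (c a b : PR) : a = b + c * 2%:R -> a = b.
Proof. by rewrite two0 mulr0 addr0. Qed.

Lemma q_neg (m : int) : m < 0 -> q m = 0.
Proof. by case: m. Qed.
Lemma b_neg (m : int) : m < 0 -> beta3 m = 0.
Proof. by case: m. Qed.

Lemma qwinE (k : nat) : qwin k = (q k, q (Posz k - 1), q (Posz k - 2), q (Posz k - 3)).
Proof.
elim: k => [|k IH]; first by [].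
have e1 : Posz k.+1 - 1 = k by lia.
have e2 : Posz k.+1 - 2 = Posz k - 1 by lia.
have e3 : Posz k.+1 - 3 = Posz k - 2 by lia.
by rewrite e1 e2 e3 {2}/q /= IH.
Qed.

Lemma qrec (m : int) : 0 <= m -> q (m + 1) = w2 * q (m - 1) + w3 * q (m - 2) + w4 * q (m - 3).
Proof.
case: m => // k _.
have -> : Posz k + 1 = Posz k.+1 by lia.
by rewrite [LHS]/q [LHS]/= qwinE.
Qed.

Lemma bwinE (k : nat) : bwin k = (beta3 k, beta3 (Posz k - 1), beta3 (Posz k - 2), beta3 (Posz k - 3)).
Proof.
elim: k => [|k IH]; first by [].
have e1 : Posz k.+1 - 1 = k by lia.
have e2 : Posz k.+1 - 2 = Posz k - 1 by lia.
have e3 : Posz k.+1 - 3 = Posz k - 2 by lia.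
by rewrite e1 e2 e3 {2}/beta3 /= IH.
Qed.

Lemma brec (m : int) : 0 <= m -> beta3 (m + 1) = w3 * beta3 m + w2 * w4 * beta3 (m - 1) + w4 ^+ 3 * beta3 (m - 3).
Proof.
case: m => // k _.
have -> : Posz k + 1 = Posz k.+1 by lia.
by rewrite [LHS]/beta3 [LHS]/= bwinE.
Qed.

Definition F (i N : int) : PR :=
  beta3 (i - 1) * q N + w4 * beta3 (i - 2) * q (N - 1)
  + (w2 * beta3 (i - 1) + w4 ^+ 2 * beta3 (i - 3)) * q (N - 2)
  + beta3 i * q (N - 3).

Lemma Fstep (i N : int) : 0 <= i -> 0 <= N -> F (i + 1) (N + 1) = w4 * F i N.
Proof.
move=> hi hN; rewrite /F.
have -> : i + 1 - 1 = i by lia.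
have -> : i + 1 - 2 = i - 1 by lia.
have -> : i + 1 - 3 = i - 2 by lia.
have -> : N + 1 - 1 = N by lia.
have -> : N + 1 - 2 = N - 1 by lia.
have -> : N + 1 - 3 = N - 2 by lia.
rewrite brec // qrec //.
apply: (char2 (w2 * beta3 i * q (N - 1) + w3 * beta3 i * q (N - 2))).
ring.
Qed.

Lemma Fiter (d k : nat) : F k (d + k)%N = w4 ^+ k * F 0 d.
Proof.
elim: k => [|k IH]; first by rewrite addn0 mul1r.
have -> : Posz k.+1 = Posz k + 1 by lia.
have -> : Posz (d + k.+1) = Posz (d + k) + 1 by lia.
by rewrite Fstep // IH exprS mulrA.
Qed.

Lemma F0 (d : nat) : F 0 d = q (Posz d - 3).
Proof. rewrite /F !(@b_neg (_ - _)) // (_ : beta3 0 = 1) // !mulr0 !mul0r !add0r mul1r; ring. Qed.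

Definition Ep (m : int) := q (2 * m) = q m ^+ 2 + w2 * q (m - 1) ^+ 2 + w4 * q (m - 2) ^+ 2.
Definition Op (m : int) := q (2 * m + 3) = w3 * q m ^+ 2.

Lemma q1 : q 1 = 0.
Proof. by rewrite /q /= !mulr0 !addr0. Qed.
Lemma q0 : q 0 = 1.
Proof. by []. Qed.

Lemma EOneg (m : int) : m < 0 -> Ep m /\ Op m.
Proof.
move=> hm; split.
  rewrite /Ep !q_neg; try lia. by rewrite expr0n /= !mulr0 !addr0.
rewrite /Op.
have [->|hm'] := eqVneq m (-1).
  rewrite (_ : 2 * -1 + 3 = 1) // q1 q_neg // expr0n /= mulr0 //.
rewrite !q_neg; try lia. by rewrite expr0n /= mulr0.
Qed.

Lemma EO (k : nat) (m : int) : m < Posz k -> Ep m /\ Op m.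
Proof.
elim: k m => [|k IH] m hm; first by apply: EOneg.
case: (boolP (m < Posz k)) => [hlt|hge]; first exact: IH.
have hmk : m = Posz k by lia.
have HE : Ep m.
  rewrite /Ep.
  have [->|hk0] := eqVneq m 0.
    by rewrite mulr0 q0 !q_neg // expr1n expr0n /= !mulr0 !addr0.
  have [E1 _] := IH (m - 1) ltac:(lia).
  have [E2 _] := IH (m - 2) ltac:(lia).
  have [_ O3] := IH (m - 3) ltac:(lia).
  move: E1 E2 O3; rewrite /Ep /Op.
  have -> : m - 1 - 1 = m - 2 by lia.
  have -> : m - 1 - 2 = m - 3 by lia.
  have -> : m - 2 - 1 = m - 3 by lia.
  have -> : m - 2 - 2 = m - 4 by lia.
  have -> : 2 * m = (2 * m - 1) + 1 by lia.
  rewrite qrec; last by lia.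
  have -> : 2 * m - 1 - 1 = 2 * (m - 1) by lia.
  have -> : 2 * m - 1 - 2 = 2 * (m - 3) + 3 by lia.
  have -> : 2 * m - 1 - 3 = 2 * (m - 2) by lia.
  move=> -> -> ->.
  move: (qrec (m - 1) ltac:(lia)).
  have -> : m - 1 + 1 = m by lia.
  have -> : m - 1 - 1 = m - 2 by lia.
  have -> : m - 1 - 2 = m - 3 by lia.
  have -> : m - 1 - 3 = m - 4 by lia.
  move=> ->.
  apply: (char2 (w2 * w4 * q (m - 3) ^+ 2
     - (w2 * q (m - 2) * (w3 * q (m - 3)) + w2 * q (m - 2) * (w4 * q (m - 4))
        + w3 * q (m - 3) * (w4 * q (m - 4))))).
  ring.
split => //.
have [_ O1] := IH (m - 1) ltac:(lia).
have [_ O2] := IH (m - 2) ltac:(lia).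
move: HE O1 O2; rewrite /Ep /Op.
have -> : 2 * m + 3 = (2 * m + 2) + 1 by lia.
rewrite qrec; last by lia.
have -> : 2 * m + 2 - 1 = 2 * (m - 1) + 3 by lia.
have -> : 2 * m + 2 - 2 = 2 * m by lia.
have -> : 2 * m + 2 - 3 = 2 * (m - 2) + 3 by lia.
move=> -> -> ->.
apply: (char2 (w2 * w3 * q (m - 1) ^+ 2 + w3 * w4 * q (m - 2) ^+ 2)).
ring.
Qed.

Lemma qpow (r : nat) : (2 <= r)%N -> q (Posz (2 ^ r) - 3) = 0.
Proof.
elim: r => // r IH hr.
have [hr2|hr3] := eqVneq r 1%N; first by subst r; rewrite (_ : Posz (2 ^ 2) - 3 = 1) ?q1.
have hr' : (2 <= r)%N by lia.
have [_ O] := EO (2 ^ r).+1 (Posz (2 ^ r) - 3) ltac:(lia).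
move: O; rewrite /Op IH // expr0n /= mulr0.
by have -> : 2 * (Posz (2 ^ r) - 3) + 3 = Posz (2 ^ r.+1) - 3 by rewrite expnS; lia.
Qed.

Theorem mainTheorem13 (r n : nat) (hr : (2 <= r)%N) (hn : (2 ^ r <= n)%N) :
  let i : int := Posz (n - 2 ^ r)%N in
  let N : int := Posz n in
  beta3 (i - 1) * q N + w4 * beta3 (i - 2) * q (N - 1)
  + (w2 * beta3 (i - 1) + w4 ^+ 2 * beta3 (i - 3)) * q (N - 2)
  + beta3 i * q (N - 3) = 0.
Proof.
move=> i N.
have := Fiter (2 ^ r) (n - 2 ^ r).
rewrite subnKC // F0 qpow // mulr0.
by rewrite /F.
Qed.
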